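(* Let $\mathcal{M}=\langle \mathcal{S},\mathcal{A},\mathcal{P},\mathcal{R},\gamma\rangle$ be a deterministic finite MDP with next-state function $\mathscr{N}$, and let $d_{\sim}$ be the unique function $\mathcal{S}\times\mathcal{S}\to\mathbb{R}$ satisfying $d_{\sim}(s,t)=\max_{a\in\mathcal{A}}\left(|\mathcal{R}(s,a)-\mathcal{R}(t,a)|+\gamma\,d_{\sim}(\mathscr{N}(s,a),\mathscr{N}(t,a))\right)$. Let $(s_n,t_n,a_n)_{n\ge1}$ be any sequence of samples drawn from a distribution $\mathcal{D}$ on $\mathcal{S}\times\mathcal{S}\times\mathcal{A}$ with full support. Let $d_0\equiv0$ and for $n\ge1$ set $d_n(s,t)=d_{n-1}(s,t)$ for $(s,t)\ne(s_n,t_n)$ and $d_n(s_n,t_n)=\max\left(d_{n-1}(s_n,t_n),\ |\mathcal{R}(s_n,a_n)-\mathcal{R}(t_n,a_n)|+\gamma\,d_{n-1}(\mathscr{N}(s_n,a_n),\mathscr{N}(t_n,a_n))\right)$. Then $d_n\le d_{\sim}$ pointwise for all $n\in\mathbb{N}$.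
   Context: A finite MDP has finite state set $\mathcal{S}$, finite action set $\mathcal{A}$, transition kernel $\mathcal{P}$, bounded reward $\mathcal{R}:\mathcal{S}\times\mathcal{A}\to\mathbb{R}$, and discount $\gamma\in[0,1)$; it is deterministic if for every $s,a$ there is a unique $\mathscr{N}(s,a)$ with $\mathcal{P}(s,a)(\mathscr{N}(s,a))=1$. *)

(* Defs.v *)
From HB Require Import structures.
From mathcomp Require Import all_boot all_order all_algebra.
From mathcomp Require Import reals.
Set Implicit Arguments. Unset Strict Implicit. Unset Printing Implicit Defensive.
Import Order.TTheory GRing.Theory Num.Theory.
Local Open Scope ring_scope.

Definition bisim_target {R : realType} {S A : finType}
  (Rw : S -> A -> R) (N : S -> A -> S) (gamma : R) (d : S -> S -> R)
  (s t : S) (a : A) : R :=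
  `|Rw s a - Rw t a| + gamma * d (N s a) (N t a).

(* d is a fixed point: d(s,t) = max_{a in A} bisim_target ... (the max over the
   finite action set, written out: attained by some a and an upper bound). *)
Definition is_bisim_fixpoint {R : realType} {S A : finType}
  (Rw : S -> A -> R) (N : S -> A -> S) (gamma : R) (d : S -> S -> R) : Prop :=
  forall s t : S,
    (exists a : A, d s t = bisim_target Rw N gamma d s t a) /\
    (forall a : A, bisim_target Rw N gamma d s t a <= d s t).

Fixpoint sampled_iter {R : realType} {S A : finType}
  (Rw : S -> A -> R) (N : S -> A -> S) (gamma : R)
  (samp : nat -> S * S * A) (n : nat) : S -> S -> R :=
  match n with
  | 0 => fun _ _ => 0
  | n'.+1 =>
      let dp := sampled_iter Rw N gamma samp n' in
      let '(sn, tn, an) := samp n in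
      fun s t =>
        if (s == sn) && (t == tn)
        then Num.max (dp sn tn) (bisim_target Rw N gamma dp sn tn an)
        else dp s t
  end.

(* Main.v *)
Require Import Defs.
From HB Require Import structures.
From mathcomp Require Import all_boot all_order all_algebra.
From mathcomp Require Import reals.
From mathcomp Require Import lra.
Import Order.TTheory GRing.Theory Num.Theory.
Local Open Scope ring_scope.

Theorem lemma3 (R : realType) (S A : finType)
  (Rw : S -> A -> R) (N : S -> A -> S) (gamma : R)
  (hg0 : 0 <= gamma) (hg1 : gamma < 1)
  (dsim : S -> S -> R) (hdsim : is_bisim_fixpoint Rw N gamma dsim)
  (D : S * S * A -> R) (hDpos : forall x, 0 < D x)
  (hDsum : \sum_(x : S * S * A) D x = 1)
  (samp : nat -> S * S * A) :
  forall (n : nat) (s t : S), sampled_iter Rw N gamma samp n s t <= dsim s t.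
Proof.
have nonneg : forall s t, 0 <= dsim s t.
  move=> s0 t0.
  pose F := fun p : S * S => dsim p.1 p.2.
  case: (@arg_minP _ R _ (s0, t0) predT F isT) => [[m1 m2] _ Hm].
  have Hmin : forall s t, dsim m1 m2 <= dsim s t by move=> s t; exact: (Hm (s, t) isT).
  have [[a _] Hub] := hdsim m1 m2.
  have H1 := Hub a; rewrite /bisim_target in H1.
  have H2 := Hmin (N m1 a) (N m2 a).
  have H3 : 0 <= `|Rw m1 a - Rw m2 a| by [].
  have H4 : gamma * dsim m1 m2 <= gamma * dsim (N m1 a) (N m2 a) by rewrite ler_wpM2l.
  have H5 : 0 <= (1 - gamma) * dsim m1 m2.
    rewrite mulrBl mul1r subr_ge0; lra.
  have Hg : 0 < 1 - gamma by rewrite subr_gt0.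
  rewrite pmulr_rge0 // in H5.
  exact: le_trans H5 (Hmin s0 t0).
move=> n; elim: n => [|n IH] s t /=; first exact: nonneg.
case: (samp n.+1) => [[sn tn] an].
case: ifP => [/andP[/eqP-> /eqP->]|_]; last exact: IH.
rewrite ge_max; apply/andP; split; first exact: IH.
have [_ Hub] := hdsim sn tn.
apply: le_trans (Hub an).
rewrite /bisim_target lerD2l ler_wpM2l //.
Qed.
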